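(* Let $Y$ be a variable. For all positive integers $n$, $$\det_{0\le i,j\le n-1}\left(Y+2^{-2\lceil(i+j+1)/2\rceil}\binom{2\lceil(i+j+1)/2\rceil}{\lceil(i+j+1)/2\rceil}\right)=(-1)^{\binom n2}2^{-n^2}\big(2\lceil n/2\rceil Y+1\big).$$ *)

(* Defs.v *)
From mathcomp Require Import all_boot all_algebra.
Set Implicit Arguments. Unset Strict Implicit. Unset Printing Implicit Defensive.
Import GRing.Theory Num.Theory.
Local Open Scope ring_scope.

Definition ceilhalf (k : nat) : nat := k.+1./2.

Definition cbin (m : nat) : rat := ('C(m.*2, m))%:R / (2%:R ^+ m.*2).

Definition entry (i j : nat) : {poly rat} := 'X + (cbin (ceilhalf (i + j).+1))%:P.

(* Main.v *)
Require Import Defs.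
From mathcomp Require Import all_boot all_algebra.
From mathcomp Require Import ring zify.
Import GRing.Theory Num.Theory.
Local Open Scope ring_scope.

Lemma half_dbl r : (r.*2)./2 = r. Proof. exact: doubleK. Qed.
Lemma half_dblS r : (r.*2.+1)./2 = r.
Proof. by rewrite -[r.*2.+1]/(true + r.*2)%N half_bit_double. Qed.
Lemma parity m : {r | m = r.*2} + {r | m = r.*2.+1}.
Proof.
case Ho: (odd m); [right|left]; exists m./2;
by rewrite -[m in LHS]odd_double_half Ho.
Qed.

Fixpoint Lf (i k : nat) {struct i} : rat :=
  match i with
  | 0 => (k == 0)%:R
  | i'.+1 => (if k is k'.+1 then Lf i' k' else 0) + (-1) ^+ k * Lf i' k - Lf i' k.+1 / 4
  end.

Lemma Lf_gt i k : (i < k)%N -> Lf i k = 0.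
Proof.
elim: i k => [|i IH] [|k] //= hk.
rewrite ltnS in hk.
rewrite (IH k hk) (IH k.+1) ?(IH k.+2); try lia.
by rewrite mulr0 mul0r subr0 addr0.
Qed.

Lemma Lf_ii i : Lf i i = 1.
Proof.
elim: i => [|i IH] //=.
by rewrite IH Lf_gt // Lf_gt // mulr0 mul0r subr0 addr0.
Qed.

Definition E (r j : nat) : rat :=
  if (j <= r)%N then ('C(r.*2.+1, r - j))%:R / 4 ^+ (r - j) else 0.

Definition G (m k : nat) : rat :=
  if odd m then (if odd k then E m./2 k./2 - E m./2 k./2.+1 / 4 else E m./2 k./2)
  else (if odd k then 0 else E m./2 k./2).

Lemma binPP n k : 'C(n.+2, k.+2) = ('C(n, k.+2) + 'C(n, k.+1) + 'C(n, k.+1) + 'C(n, k))%N.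
Proof. rewrite !binS; lia. Qed.

Lemma E_rec0 r : E r.+1 0 = 3/4 * E r 0 + E r 1 / 16.
Proof.
rewrite /E !leq0n !subn0.
case: r => [|r].
  by rewrite bin1 bin0 /= expr1 expr0; change (1.*2.+1)%N with 3%N; field.
rewrite /= subn1 /=.
have -> : (r.+2).*2.+1 = (r.+1).*2.+1.+2 by rewrite !doubleS.
rewrite binPP.
have -> : 'C((r.+1).*2.+1, r.+2) = 'C((r.+1).*2.+1, r.+1).
  by rewrite -bin_sub ?doubleS; [congr 'C(_,_); lia | lia].
rewrite !natrD !exprS.
have h4 : (4 : rat) ^+ r != 0 by rewrite expf_neq0.
field; exact: h4.
Qed.

Lemma E_in r j u : r = (j + u)%N -> E r j = ('C(r.*2.+1, u))%:R / 4 ^+ u.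
Proof. move=> ->; rewrite /E leq_addr addKn //. Qed.
Lemma E_out r j : (r < j)%N -> E r j = 0.
Proof. by rewrite /E ltnNge => /negPf ->. Qed.

Lemma E_recS r j : E r.+1 j.+1 = E r j - E r j.+1 / 4 + 3/4 * E r j.+1 + E r j.+2 / 16.
Proof.
case: (leqP j r) => hj; last first.
  rewrite (@E_out r.+1 j.+1) ?(@E_out r j) ?(@E_out r j.+1) ?(@E_out r j.+2); try lia; ring.
have [u ->] : exists u, r = (j + u)%N by exists (r - j)%N; lia.
rewrite (@E_in _ _ u) ?(@E_in (j+u) j u); try lia.
case: u => [|[|u]].
- rewrite (@E_out (j+0) j.+1) ?(@E_out (j+0) j.+2); try lia. rewrite !bin0 !expr0; ring.
- rewrite (@E_in _ _ 0) ?(@E_out (j+1) j.+2); try lia.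
  rewrite bin0 !bin1 expr0 expr1 addn1 doubleS.
  by rewrite -addn1 !natrD; field.
- rewrite (@E_in _ _ u.+1) ?(@E_in (j+u.+2) j.+2 u); try lia.
  have -> : ((j + u.+2).+1.*2.+1 = ((j + u.+2).*2.+1).+2)%N by rewrite doubleS.
  rewrite binPP !natrD !exprS.
  have h4 : (4 : rat) ^+ u != 0 by rewrite expf_neq0.
  by field; exact: h4.
Qed.

Lemma G_ee r j : G r.*2 j.*2 = E r j.
Proof. by rewrite /G !odd_double !half_dbl. Qed.
Lemma G_eo r j : G r.*2 j.*2.+1 = 0.
Proof. by rewrite /G /= !odd_double. Qed.
Lemma G_oe r j : G r.*2.+1 j.*2 = E r j.
Proof. by rewrite /G /= !odd_double /= !uphalf_double ?half_dbl. Qed.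
Lemma G_oo r j : G r.*2.+1 j.*2.+1 = E r j - E r j.+1 / 4.
Proof. by rewrite /G /= !odd_double /= !uphalf_double ?half_dbl. Qed.

Lemma sgn_e j : (-1 : rat) ^+ j.*2 = 1.
Proof. by rewrite -signr_odd odd_double. Qed.
Lemma sgn_o j : (-1 : rat) ^+ j.*2.+1 = -1.
Proof. by rewrite -signr_odd /= odd_double. Qed.

Lemma G_rec m k : G m.+1 k =
  (if k is k'.+1 then G m k' else 0) + (-1) ^+ k * G m k - G m k.+1 / 4.
Proof.
case: (parity m) => [[r ->]|[r ->]]; case: (parity k) => [[j ->]|[j ->]].
- rewrite G_oe sgn_e G_ee G_eo.
  by case: j => [|j]; rewrite ?double0 ?doubleS ?G_eo; field.
- by rewrite G_oo sgn_o G_eo G_ee -doubleS G_ee; field.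
- rewrite -doubleS G_ee sgn_e G_oe G_oo.
  case: j => [|j].
    by rewrite double0 E_rec0; field.
  by rewrite doubleS G_oo E_recS; field.
- by rewrite -doubleS G_eo sgn_o G_oe G_oo -doubleS G_oe; field.
Qed.

Lemma Lf_G m k : Lf m k = G m k.
Proof.
elim: m k => [|m IH] k.
  rewrite /G /=; case: (parity k) => [[j ->]|[j ->]].
    rewrite odd_double half_dbl.
    by case: j => [|j] //; rewrite /E.
  by rewrite /= odd_double.
by rewrite G_rec /= !IH; case: k => [|k] //; rewrite IH.
Qed.

Lemma pow4 r : (2 : rat) ^+ r.*2 = 4 ^+ r.
Proof. by rewrite -mul2n exprM (_ : (2:rat) ^+ 2 = 4) // expr2 -natrM. Qed.

Lemma Lf0 m : Lf m 0 = 2 * cbin (ceilhalf m.+1).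
Proof.
rewrite Lf_G /G /= (_ : (if odd m then _ else _) = E m./2 0); last by case: ifP.
rewrite /ceilhalf /cbin /= /E leq0n subn0.
set r := m./2.
rewrite doubleS binS.
have -> : 'C(r.*2.+1, r.+1) = 'C(r.*2.+1, r).
  by rewrite -bin_sub ?doubleS; [congr 'C(_,_); lia | lia].
rewrite !exprS pow4 natrD.
have h4 : (4 : rat) ^+ r != 0 by rewrite expf_neq0.
by field.
Qed.

Definition prevf (F : nat -> rat) (k : nat) : rat := if k is k'.+1 then F k' else 0.

Lemma Lf_S i k : Lf i.+1 k = prevf (Lf i) k + (-1) ^+ k * Lf i k - Lf i k.+1 / 4.
Proof. by []. Qed.

Lemma sum_shift1 (F g : nat -> rat) N : F N = 0 ->
  \sum_(k < N.+1) prevf F k * g k = \sum_(k < N.+1) F k * g k.+1.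
Proof.
move=> h; rewrite big_ord_recl big_ord_recr /= h !mul0r addr0 add0r.
by apply: eq_bigr => k _; rewrite /bump add0n leq0n add1n.
Qed.

Lemma sum_shift2 (F g : nat -> rat) N : F N.+1 = 0 ->
  \sum_(k < N.+1) F k.+1 * g k = \sum_(k < N.+1) F k * prevf g k.
Proof.
move=> h; rewrite [LHS]big_ord_recr [RHS]big_ord_recl /= h mul0r mulr0 addr0 add0r.
by apply: eq_bigr => k _; rewrite /bump add0n leq0n add1n.
Qed.

Lemma sum_trunc (F : nat -> rat) M N : (M <= N)%N -> (forall k, (M <= k)%N -> F k = 0) ->
  \sum_(k < N) F k = \sum_(k < M) F k.
Proof.
move=> hMN hF; rewrite (big_ord_widen N F hMN) [RHS]big_mkcond /=.
apply: eq_bigr => k _; case: ifP => // /negbT; rewrite -leqNgt => /hF ->. done.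
Qed.

Lemma Lf_sum i N (g : nat -> rat) : (i < N)%N ->
  \sum_(k < N.+1) Lf i.+1 k * g k =
  \sum_(k < N.+1) Lf i k * (g k.+1 + (-1) ^+ k * g k - prevf g k / 4).
Proof.
move=> hi.
have e1 := @sum_shift1 (Lf i) g N (@Lf_gt i N hi).
have e2 := @sum_shift2 (Lf i) g N (@Lf_gt i N.+1 (leqW hi)).
transitivity (\sum_(k < N.+1) (prevf (Lf i) k * g k)
   + \sum_(k < N.+1) ((-1) ^+ k * Lf i k * g k) - (\sum_(k < N.+1) Lf i k.+1 * g k) / 4).
  rewrite -big_split mulr_suml -sumrB; apply: eq_bigr => k _.
  by rewrite Lf_S /=; field.
by rewrite e1 e2 -big_split mulr_suml -sumrB; apply: eq_bigr => k _ /=; field.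
Qed.

Definition w (k : nat) : rat := 2^-1 * (- 4^-1) ^+ k.
Lemma w_S k : w k.+1 = - w k / 4.
Proof. by rewrite /w exprS; field. Qed.

Definition T (i j : nat) : rat := \sum_(k < (i + j).+1) Lf i k * Lf j k * w k.

Lemma T_step i j : T i.+1 j = T i j.+1.
Proof.
rewrite /T addSn addnS.
under eq_bigr do rewrite -mulrA.
rewrite (@Lf_sum i (i+j).+1 (fun k => Lf j k * w k)); last by rewrite ltnS leq_addr.
apply: eq_bigr => k _; rewrite Lf_S !w_S.
case: (nat_of_ord k) => [|k'] /=; first by field.
by rewrite w_S; field.
Qed.

Lemma T_hankel i j : T i j = T 0 (i + j).
Proof.
elim: i j => [|i IH] j //.
by rewrite T_step IH addnS addSn.
Qed.

Lemma T0 m : T 0 m = cbin (ceilhalf m.+1).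
Proof.
rewrite /T big_ord_recl big1 /=.
  by rewrite Lf0 /w expr0; field.
by move=> k _; rewrite /= !mul0r.
Qed.

Lemma T_val i j : T i j = cbin (ceilhalf (i + j).+1).
Proof. by rewrite T_hankel T0. Qed.

Lemma det_rank1 (R : comNzRingType) n (u : 'cV[R]_n) (v : 'rV[R]_n) :
  \det (1%:M + u *m v) = 1 + (v *m u) 0 0.
Proof.
pose P1 := block_mx (1%:M : 'M[R]_n) (0 : 'M_(n,1)) v (1%:M : 'M_1).
pose P2 := block_mx (1%:M + u *m v) u (0 : 'M_(1,n)) (1%:M : 'M_1).
pose P3 := block_mx (1%:M : 'M[R]_n) (0 : 'M_(n,1)) (- v) (1%:M : 'M_1).
have E : P1 *m P2 *m P3 = block_mx 1%:M u 0 (1%:M + v *m u).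
  rewrite /P1 /P2 /P3 !mulmx_block.
  rewrite !mul1mx !mulmx1 !mul0mx !mulmx0 !addr0 !add0r.
  rewrite mulmxDl mulmxDr mul1mx mulmxN mulmxA mulmxN.
  congr block_mx; first by rewrite addrK.
    by rewrite mulmx1 -opprD [v *m u *m v + v]addrC subrr.
  by rewrite addrC.
have := congr1 determinant E.
rewrite !det_mulmx /P1 /P2 /P3 det_lblock det_ublock det_lblock det_ublock !det1 !mulr1 !mul1r.
by rewrite det_mx11 !mxE /=.
Qed.

Definition z (k : nat) : rat := if odd k then 0 else (4^-1) ^+ k./2.

Lemma z_rec k : z k.+1 + (-1) ^+ k * z k - prevf z k / 4 = z k.
Proof.
case: (parity k) => [[j ->]|[j ->]].
  rewrite /z /= odd_double sgn_e.
  by case: j => [|j] /=; rewrite ?double0 ?doubleS /= ?odd_double /=; field.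
rewrite /z /= odd_double /= half_dbl mulr0 exprS.
by field.
Qed.

Lemma Lz i : \sum_(k < i.+1) Lf i k * z k = 1.
Proof.
elim: i => [|i IH].
  by rewrite big_ord1 /= /z /= expr0 mulr1.
rewrite (@Lf_sum i i.+1 z) //.
under eq_bigr do rewrite z_rec.
rewrite (@sum_trunc (fun k => Lf i k * z k) i.+1) //.
by move=> k hk; rewrite Lf_gt ?mul0r.
Qed.

Lemma zz k : z k * (z k / w k) = if odd k then 0 else 2.
Proof.
rewrite /z /w; case: (parity k) => [[j ->]|[j ->]]; rewrite ?odd_double //=.
  rewrite half_dbl -mul2n exprM sqrrN.
  have h : (4 : rat)^-1 ^+ j != 0 by rewrite expf_neq0 // invr_eq0.
  rewrite -exprM mulnC exprM.
  by field.
by rewrite odd_double /= mul0r.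
Qed.

Lemma sum_zz n : \sum_(k < n) z k * (z k / w k) = (2 * ceilhalf n)%:R.
Proof.
elim: n => [|n IH]; first by rewrite big_ord0.
rewrite big_ord_recr /= IH zz /ceilhalf.
case: (parity n) => [[j ->]|[j ->]]; rewrite ?odd_double /=.
  by rewrite uphalf_double half_dbl -natrD; congr _%:R; lia.
by rewrite odd_double /= addr0 uphalf_double half_dbl.
Qed.

Lemma prod_w n : \prod_(k < n) w k = (-1) ^+ 'C(n, 2) / 2 ^+ (n ^ 2).
Proof.
elim: n => [|n IH]; first by rewrite big_ord0 expr0 divr1.
rewrite big_ord_recr /= IH binS bin1.
have -> : (n.+1 ^ 2 = n ^ 2 + n.*2 + 1)%N by rewrite !expnS expn0 !muln1; lia.
rewrite !exprD pow4 /w.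
rewrite (exprNn (4^-1 : rat)) exprVn expr1.
have h1 : (2 : rat) ^+ (n ^ 2) != 0 by rewrite expf_neq0.
have h2 : (4 : rat) ^+ n != 0 by rewrite expf_neq0.
by field; rewrite h1 h2.
Qed.

Theorem mainTheorem10 (n : nat) (hn : (0 < n)%N) :
  \det (\matrix_(i < n, j < n) entry i j) =
  ((-1) ^+ 'C(n, 2) / (2%:R ^+ (n ^ 2)) : rat) *:
    ((2 * ceilhalf n)%:R *: 'X + 1).
Proof.
pose Lp := \matrix_(i < n, k < n) (Lf i k)%:P : 'M[{poly rat}]_n.
pose Dp := diag_mx (\row_(k < n) (w k)%:P) : 'M[{poly rat}]_n.
pose zp := \col_(k < n) (z k)%:P : 'cV[{poly rat}]_n.
pose qp := \col_(k < n) (z k / w k)%:P : 'cV[{poly rat}]_n.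
have wn0 k : w k != 0.
  by rewrite /w mulf_neq0 ?invr_eq0 // expf_neq0 // oppr_eq0 invr_eq0.
have F1 : Lp *m zp = const_mx 1.
  apply/matrixP => i j; rewrite !mxE.
  rewrite (eq_bigr (fun k : 'I_n => (Lf i k * z k)%:P)); last by move=> k _; rewrite !mxE polyCM.
  rewrite -rmorph_sum (@sum_trunc (fun k => Lf i k * z k) i.+1 n) ?Lz //.
  by move=> k hk; rewrite Lf_gt ?mul0r.
have F2 : Lp *m Dp *m Lp^T = \matrix_(i, j) (cbin (ceilhalf (i + j).+1))%:P.
  apply/matrixP => i j; rewrite mul_mx_diag !mxE.
  rewrite (eq_bigr (fun k : 'I_n => (Lf i k * Lf j k * w k)%:P)); last first.
    by move=> k _; rewrite !mxE -!polyCM mulrAC.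
  rewrite -rmorph_sum -T_val /T (@sum_trunc (fun k => Lf i k * Lf j k * w k) i.+1 n) //.
    rewrite (@sum_trunc (fun k => Lf i k * Lf j k * w k) i.+1 (i + j).+1) //.
      by rewrite ltnS leq_addr.
    by move=> k hk; rewrite Lf_gt ?mul0r.
  by move=> k hk; rewrite Lf_gt ?mul0r.
have F3 : Dp *m qp = zp.
  apply/matrixP => i j; rewrite mul_diag_mx !mxE -polyCM; congr _%:P.
  by field; rewrite wn0.
have EA : \matrix_(i < n, j < n) entry i j =
    Lp *m (Dp *m (1%:M + ('X *: qp) *m zp^T)) *m Lp^T.
  rewrite mulmxDr mulmx1 -scalemxAl -scalemxAr mulmxA F3.
  rewrite mulmxDr mulmxDl F2 -scalemxAr -scalemxAl mulmxA -[Lp *m zp *m zp^T *m Lp^T]mulmxA -trmx_mul F1.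
  apply/matrixP => i j; rewrite !mxE big_ord1 !mxE mulr1 mulr1.
  by rewrite /entry addrC.
rewrite EA !det_mulmx det_tr det_rank1.
have dL : \det Lp = 1.
  rewrite det_trig; last by apply/is_trig_mxP => i j hij; rewrite mxE Lf_gt.
  by apply: big1 => i _; rewrite mxE Lf_ii.
rewrite dL det_diag mul1r mulr1.
rewrite (eq_bigr (fun k : 'I_n => (w k)%:P)); last by move=> k _; rewrite mxE.
rewrite -rmorph_prod prod_w.
rewrite -scalemxAr mxE mxE.
rewrite (eq_bigr (fun k : 'I_n => (z k * (z k / w k))%:P)); last first.
  by move=> k _; rewrite !mxE -polyCM.
rewrite -rmorph_sum sum_zz.
rewrite -!mul_polyC.
ring.
Qed.
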